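(* For every non-negative integer $n$, the number of partitions into an even number of distinct parts $\lambda_1>\lambda_2>\dots>\lambda_{2l}$ with $\lambda_1+\lambda_3+\dots+\lambda_{2l-1}=n$ equals the number of partitions of $n$ with non-negative crank. Equivalently, \[\sum_{\pi\in\mathcal{D}_e}q^{\mathcal{O}(\pi)}=\sum_{\pi\in\tilde C_{\ge0}}q^{|\pi|},\] where $\mathcal{D}_e$ is the set of partitions into an even number of distinct parts, $\mathcal{O}(\pi)$ is the sum of the odd-indexed parts of $\pi$, and $\tilde C_{\ge 0}$ is the set of partitions with crank $\ge 0$.
   Context: A partition is a finite weakly decreasing sequence of positive integers $(\lambda_1,\lambda_2,\dots)$; the empty partition has $0$ parts (an even number) and norm $0$. The crank of a partition $\pi$ is defined as: the largest part of $\pi$ if $1$ is not a part of $\pi$ (the empty partition has crank $0$); otherwise, (the number of parts of $\pi$ larger than the number of $1$'s in $\pi$) minus (the number of $1$'s in $\pi$). *)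

(* Defs.v *)
From mathcomp Require Import all_boot all_order all_algebra.
Set Implicit Arguments. Unset Strict Implicit. Unset Printing Implicit Defensive.

Definition is_partition (s : seq nat) : bool :=
  all (fun x => ltn 0 x) s && sorted geq s.

Definition is_distinct_partition (s : seq nat) : bool :=
  all (fun x => ltn 0 x) s && sorted gtn s.

Definition in_De (s : seq nat) : bool :=
  is_distinct_partition s && ~~ odd (size s).

(* O(pi): sum of the odd-indexed parts lambda_1 + lambda_3 + ...
   (1-based indices, i.e. 0-based even positions). *)
Definition odd_indexed_sum (s : seq nat) : nat :=
  \sum_(i < size s | ~~ odd i) nth 0 s i.

Definition crank (s : seq nat) : int :=
  let w := count_mem 1 s in
  if w == 0 then Posz (\max_(x <- s) x)%N
  else (Posz (count (fun x => ltn w x) s) - Posz w)%R.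

(* Main.v *)
Require Import Defs.
From mathcomp Require Import all_boot all_order all_algebra.
From mathcomp Require Import zify.
Import Order.TTheory GRing.Theory Num.Theory.
Set Implicit Arguments. Unset Strict Implicit.

Definition lvl := seq (nat * nat).

Fixpoint build (l : lvl) : seq nat :=
  match l with
  | [::] => [::]
  | (x, w) :: r => x :: (map succn (build r) ++ nseq w 1)
  end.

Definition hx0 (l : lvl) := match l with [::] => 0 | (x,_)::_ => x end.
Definition hx (l : lvl) := match l with [::] => 1 | (x,_)::_ => x end.

Fixpoint valid (l : lvl) : bool :=
  match l with
  | [::] => true
  | (x, w) :: r => (0 < x) && (hx0 r < x) && valid r
  end.

Fixpoint tv (l : lvl) : bool :=
  match l with
  | [::] => true
  | (x, w) :: r => (hx r < x) && tv r
  end.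

Lemma all_pos_build l : valid l -> all (fun y => 0 < y) (build l).
Proof.
elim: l => [|[x w] r IH] //= /andP[/andP[x0 _] vr].
rewrite x0 all_cat all_map /=.
apply/andP; split.
  by apply/allP => y _.
by apply/allP => y /nseqP [-> _].
Qed.

Lemma head_build l : head 0 (build l) = hx0 l.
Proof. by case: l => [|[x w] r]. Qed.

Lemma path_succ x B : path geq x B -> path geq x.+1 (map succn B).
Proof. by elim: B x => [|y B IH] x //= /andP[h1 h2]; rewrite ltnS h1 IH. Qed.

Lemma path_nseq1 y w : 0 < y -> path geq y (nseq w 1).
Proof. by elim: w y => [|w IH] y //= y0; rewrite y0 IH. Qed.

Lemma path_head y B : sorted geq B -> head 0 B <= y -> path geq y B.
Proof. by case: B => //= b B -> ->. Qed.

Lemma last_pos x B : 0 < x -> all (fun y => 0 < y) B -> 0 < last x B.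
Proof. by elim: B x => [|b B IH] x //= x0 /andP[b0 hB]; apply: IH. Qed.

Lemma sorted_build l : valid l -> sorted geq (build l).
Proof.
elim: l => [|[x w] r IH] //= /andP[/andP[x0 hr] vr].
rewrite cat_path; apply/andP; split.
  have -> : x = (x.-1).+1 by lia.
  apply: path_succ; apply: path_head; first exact: IH.
  rewrite head_build; lia.
apply: path_nseq1; apply: last_pos => //.
rewrite all_map; apply/allP => y _ //.
Qed.

Lemma is_partition_build l : valid l -> is_partition (build l).
Proof. by move=> v; rewrite /is_partition all_pos_build // sorted_build. Qed.

Definition sb l := size (build l).

Lemma sumn_build x w r :
  sumn (build ((x, w) :: r)) = x + sumn (build r) + size (build r) + w.
Proof.
rewrite /= sumn_cat.
have -> : sumn (nseq w 1) = w by elim: w => //= w ->; lia.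
have -> : sumn (map succn (build r)) = sumn (build r) + size (build r).
  by elim: (build r) => //= a s ->; lia.
lia.
Qed.

Lemma size_build x w r : size (build ((x, w) :: r)) = (size (build r) + w).+1.
Proof. by rewrite /= size_cat size_map size_nseq. Qed.

Fixpoint unb (f : nat) (p : seq nat) : lvl :=
  match f, p with
  | f'.+1, x :: t => (x, count_mem 1 t) :: unb f' (map predn (filter (fun y => 1 < y) t))
  | _, _ => [::]
  end.

Definition unbuild p := unb (size p) p.

Lemma count1_map_succ B : all (fun y => 0 < y) B -> count_mem 1 (map succn B) = 0.
Proof. elim: B => //= b B IH /andP[b0 hB]; rewrite IH //; case: b b0 {hB}. by []. by []. Qed.

Lemma filter_succ_nseq B w : all (fun y => 0 < y) B ->
  filter (fun y => 1 < y) (map succn B ++ nseq w 1) = map succn B.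
Proof.
move=> hB; rewrite filter_cat.
have -> : filter (fun y => 1 < y) (nseq w 1) = [::] by elim: w.
rewrite cats0; apply/all_filterP; rewrite all_map; apply/allP => y yB /=.
by have := allP hB y yB.
Qed.

Lemma unb_build f l : valid l -> size (build l) <= f -> unb f (build l) = l.
Proof.
elim: f l => [|f IH] [|[x w] r] //=.
move=> /andP[_ vr] hs.
have hB := all_pos_build vr.
rewrite count_cat count1_map_succ // add0n.
have -> : count_mem 1 (nseq w 1) = w by elim: (w) => //= w' ->.
rewrite filter_succ_nseq // -map_comp (@eq_map _ _ _ id) ?map_id //.
rewrite IH //; move: hs; rewrite size_cat size_map; lia.
Qed.

Lemma geq_trans : transitive geq.
Proof. by move=> a b c h1 h2; exact: leq_trans h2 h1. Qed.

Lemma split_ones t : sorted geq t -> all (fun y => 0 < y) t ->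
  t = filter (fun y => 1 < y) t ++ nseq (count_mem 1 t) 1.
Proof.
elim: t => [|y t IH] //= st /andP[y0 pt].
have st' : sorted geq t by move: st; case: t {IH pt} => //= z t /andP[].
case: (ltnP 1 y) => hy.
  have -> : (y == 1) = false by apply/negbTE; lia.
  by rewrite /= {1}(IH st' pt).
have y1 : y = 1 by lia.
subst y; rewrite eqxx /=.
have : all (fun z => z <= 1) t.
  by move: st; rewrite (path_sortedE geq_trans) => /andP[].
move=> h1.
have -> : filter (fun y => 1 < y) t = [::].
  apply/eqP; rewrite -(negbK (_ == _)) -has_filter; apply/hasPn => z zt.
  by have := allP h1 z zt; rewrite -leqNgt.
have h2 : all (pred1 1) t.
  apply/allP => z zt /=; apply/eqP.
  have := allP h1 z zt; have := allP pt z zt; lia.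
have -> : count_mem 1 t = size t by apply/eqP; rewrite -all_count.
by rewrite /= -(all_pred1P _ _ h2).
Qed.

Lemma hx0_unb f p : size p <= f -> hx0 (unb f p) = head 0 p.
Proof. by case: f p => [|f] [|x t]. Qed.

Lemma build_unb f p : is_partition p -> size p <= f ->
  valid (unb f p) && (build (unb f p) == p).
Proof.
elim: f p => [|f IH] [|x t] //= /andP[/andP[x0 pt] st] hs.
have st' : sorted geq t by move: st; case: t {pt hs} => //= z t /andP[].
set rho := map predn (filter (fun y => 1 < y) t).
have hall : all (fun y => 1 < y) (filter (fun y => 1 < y) t).
  by apply/allP => y; rewrite mem_filter => /andP[].
have prho : is_partition rho.
  rewrite /is_partition /rho all_map; apply/andP; split.
    by apply/allP => y yin /=; have := allP hall y yin; lia.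
  apply: (homo_sorted (e := geq)); first by move=> a b /=; lia.
  exact: (sorted_filter geq_trans _ st').
have hsr : size rho <= f.
  rewrite /rho size_map size_filter; have := count_size (fun y => 1 < y) t; lia.
have /andP[vr /eqP br] := IH rho prho hsr.
have tx : all (fun y => y <= x) t.
  by move: st; rewrite /= (path_sortedE geq_trans) => /andP[].
have hrx : all (fun y => y < x) rho.
  rewrite /rho all_map; apply/allP => y; rewrite mem_filter => /andP[y1 yt] /=.
  have := allP tx y yt; lia.
apply/andP; split.
  apply/andP; split; last by []. apply/andP; split; first by []. rewrite hx0_unb //.
  by case: (rho) hrx => //= y r /andP[].
rewrite br; apply/eqP; congr (_ :: _).
rewrite [RHS](split_ones st' pt); congr (_ ++ _).
rewrite /rho -map_comp -[RHS]map_id; apply/eq_in_map.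
by move=> y yin /=; have := allP hall y yin; lia.
Qed.

Lemma valid_unbuild p : is_partition p -> valid (unbuild p).
Proof. by move=> h; have /andP[] := build_unb h (leqnn _). Qed.

Lemma build_unbuild p : is_partition p -> build (unbuild p) = p.
Proof. by move=> h; have /andP[_ /eqP] := build_unb h (leqnn _). Qed.

Lemma unbuild_build l : valid l -> unbuild (build l) = l.
Proof. by move=> v; apply: unb_build. Qed.

Definition w1 (l : lvl) := (head (0,0) l).2.
Definition lastx (l : lvl) := (last (2,0) l).1.
Definition Bc (l : lvl) :=
  if 1 < lastx l then w1 l <= size l else (1 < size l) && (w1 l < size l).

Lemma count_gt_build k x w r : 0 < k -> valid r ->
  count (fun y => k < y) (build ((x, w) :: r)) =
  (k < x) + count (fun y => k.-1 < y) (build r).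
Proof.
move=> k0 vr /=; rewrite count_cat count_map.
have -> : count (fun y => k < y) (nseq w 1) = 0.
  by elim: w => //= w ->; case: k k0.
rewrite addn0; congr (_ + _); apply: eq_count => y /=; lia.
Qed.

Lemma valid_headx l : valid l -> l != [::] -> size l + lastx l <= hx0 l + 1.
Proof.
elim: l => [|[x w] r IH] //= /andP[/andP[x0 hr] vr] _.
case: r IH hr vr => [|[y z] r] IH /= hr vr.
  by rewrite /lastx /=; lia.
have := IH vr erefl; rewrite /lastx /=; lia.
Qed.

Lemma lastx_pos l : valid l -> 0 < lastx l.
Proof.
elim: l => [|[x w] r IH] //= /andP[/andP[x0 hr] vr].
by case: r IH hr vr => [|[y z] r] IH //= hr vr; apply: IH.
Qed.

Lemma count_pos_build l : valid l -> count (fun y => 0 < y) (build l) = size (build l).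
Proof. by move=> v; apply/eqP; rewrite -all_count all_pos_build. Qed.

Lemma crit l k : valid l -> 0 < k ->
  (k <= count (fun y => k < y) (build l)) =
  (k < size l) || ((k == size l) && (1 < lastx l)).
Proof.
elim: l k => [|[x w] r IH] k.
  by case: k.
move=> v k0; rewrite /= in v; case/andP: v => /andP[x0 hr] vr.
rewrite count_gt_build //.
case: k k0 => [|[|k]] // _.
  rewrite /= count_pos_build //.
  case: r {IH} hr vr => [|[y z] r] hr vr.
    by rewrite /lastx /=; case: x x0 {hr}  => [|[|x]].
  rewrite size_build /lastx /=; lia.
rewrite /= -/(valid r) .
have e : (k.+2 == (size r).+1) && (1 < lastx ((x, w) :: r)) =
         (k.+1 == size r) && (1 < lastx r).
  case: r {IH hr vr} => [|[y z] r] //=.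
rewrite e ltnS -IH //.
case: (leqP k.+1 (count (fun y => k.+1 < y) (build r))) => h.
  have hh : (k.+1 < size r) || (k.+1 == size r) && (1 < lastx r) by rewrite -IH.
  have rne : r != [::] by case: r {IH hr vr e h} hh.
  have vh := valid_headx vr rne.
  have lx := lastx_pos vr.
  have : k.+2 < x by case/orP: hh => [h1|/andP[/eqP h1 h2]]; lia.
  move=> ->; lia.
case: (k.+2 < x); lia.
Qed.

Lemma ones_build x w r : valid r ->
  count_mem 1 (build ((x, w) :: r)) = (x == 1) + w.
Proof.
move=> vr /=; rewrite count_cat count1_map_succ ?all_pos_build // add0n.
congr (_ + _); by elim: w => //= w ->.
Qed.

Lemma crank_ge0 a b : (0 <= Posz a - Posz b)%R = (b <= a).
Proof. by rewrite subr_ge0 lez_nat. Qed.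

Lemma crank_build l : valid l -> (0 <= crank (build l))%R = Bc l.
Proof.
case: l => [|[x w] r] //.
move=> v; have v' := v; rewrite /= in v'; case/andP: v' => /andP[x0 hr] vr.
rewrite /crank ones_build //.
have hb : forall c : nat, (0 <= Posz c)%R by [].
case: eqP => [o0|o0].
  rewrite hb; symmetry.
  have w0 : w = 0 by lia.
  have x1 : x != 1 by apply/eqP; lia.
  rewrite /Bc /w1 /= w0.
  case: r {v} hr vr => [|[y z] r] hr vr /=.
    by rewrite /lastx /=; case: ifP => // ; lia.
  case: ifP => //= _; apply/andP; split => //.
rewrite crank_ge0 crit //; last by lia.
rewrite /Bc /w1 /=.
case: r {v} hr vr => [|[y z] r] hr vr.
  rewrite /lastx /=; case: (ltnP 1 x) => hx; lia.
have y0 : 0 < y by move: vr => /= /andP[/andP[]].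
have -> : lastx ((x, w) :: (y, z) :: r) = lastx ((y, z) :: r) by [].
have -> : (x == 1) = false by apply/negbTE; move: hr => /=; lia.
rewrite add0n.
case: (ltnP 1 (lastx ((y, z) :: r))) => hl /=; lia.
Qed.

Definition setw1 (l : lvl) v := match l with (x, _) :: r => (x, v) :: r | [::] => [::] end.

Definition phi (l : lvl) : lvl :=
  if w1 l <= size l then l
  else rcons (setw1 l (w1 l %% (size l).+1)) (1, (w1 l %/ (size l).+1).-1).

Definition psi (l : lvl) : lvl :=
  if 1 < lastx l then l
  else setw1 (take (size l).-1 l) (w1 l + ((last (2,0) l).2).+1 * size l).

Definition S (l : lvl) := sumn (build l).

Lemma tv_valid l : tv l = valid l && (1 < lastx l).
Proof.
elim: l => [|[x w] r IH] //=.
rewrite IH; case: r {IH} => [|[y z] r] /=.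
  by rewrite /lastx /=; case: x => [|[|x]].
case: (0 < y) => //=; last by rewrite !andbF.
have -> : lastx ((x, w) :: (y, z) :: r) = lastx ((y, z) :: r) by [].
case: (ltnP y x) => h.
  by have -> : 0 < x by lia.
by rewrite andbF.
Qed.

Lemma hx0_rcons1 m z : hx0 (rcons m (1, z)) = hx m.
Proof. by case: m => [|[x w] m]. Qed.

Lemma tv_rcons m z : tv m -> valid (rcons m (1, z)).
Proof.
elim: m => [|[x w] m IH] //= /andP[hm tm].
rewrite hx0_rcons1 hm IH // andbT.
by case: m {IH tm} hm => [|[y u] m] /=; lia.
Qed.

Lemma rcons_tv m z : valid (rcons m (1, z)) -> tv m.
Proof.
elim: m => [|[x w] m IH] //= /andP[/andP[x0 hm] vm].
by rewrite -(hx0_rcons1 m z) hm IH.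
Qed.

Lemma tv_setw1 l v : tv (setw1 l v) = tv l.
Proof. by case: l => [|[x w] r]. Qed.

Lemma valid_setw1 l v : valid (setw1 l v) = valid l.
Proof. by case: l => [|[x w] r]. Qed.

Lemma size_setw1 l v : size (setw1 l v) = size l.
Proof. by case: l => [|[x w] r]. Qed.

Lemma w1_setw1 l v : l != [::] -> w1 (setw1 l v) = v.
Proof. by case: l => [|[x w] r]. Qed.

Lemma setw1K l : setw1 l (w1 l) = l.
Proof. by case: l => [|[x w] r]. Qed.

Lemma setw1_setw1 l a b : setw1 (setw1 l a) b = setw1 l b.
Proof. by case: l => [|[x w] r]. Qed.

Lemma setw1_rcons l v t : l != [::] -> setw1 (rcons l t) v = rcons (setw1 l v) t.
Proof. by case: l => [|[x w] r]. Qed.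

Lemma w1_rcons l t : l != [::] -> w1 (rcons l t) = w1 l.
Proof. by case: l => [|[x w] r]. Qed.

Lemma S_setw1 l v : l != [::] -> S (setw1 l v) + w1 l = S l + v.
Proof. case: l => [|[x w] r] // _; rewrite /S /w1 !sumn_build /=; lia. Qed.

Lemma build_cat_size m t : size (build (m ++ t)) = size (build m) + size (build t).
Proof.
elim: m => [|[x w] m IH] //=.
by rewrite !size_cat !size_map !size_nseq IH; lia.
Qed.

Lemma S_cat m t : S (m ++ t) = S m + S t + size m * size (build t).
Proof.
rewrite /S; elim: m => [|[x w] m IH]; first by rewrite /= add0n mul0n addn0.
rewrite cat_cons !sumn_build IH build_cat_size /=; lia.
Qed.

Lemma S_rcons1 m z : S (rcons m (1, z)) = S m + (size m).+1 * z.+1.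
Proof.
rewrite -cats1 S_cat /S sumn_build size_build /=.
lia.
Qed.

Lemma lastx_rcons m y z : lastx (rcons m (y, z)) = y.
Proof. by rewrite /lastx last_rcons. Qed.

Lemma phi_TB l : tv l -> valid (phi l) && Bc (phi l).
Proof.
move=> t; have := t; rewrite tv_valid => /andP[v lx].
rewrite /phi; case: leqP => h.
  by rewrite v /Bc lx h.
have ne : l != [::] by case: l {t v lx} h.
rewrite tv_rcons ?tv_setw1 //= /Bc lastx_rcons /= size_rcons size_setw1.
have ne2 : setw1 l (w1 l %% (size l).+1) != [::] by case: (l) ne => [|[? ?] ?]. rewrite w1_rcons // w1_setw1 //.
rewrite ltn_pmod // andbT; case: (l) ne => //.
Qed.

Lemma psi_phi l : tv l -> psi (phi l) = l.
Proof.
move=> t; have := t; rewrite tv_valid => /andP[v lx].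
rewrite /phi; case: leqP => h.
  by rewrite /psi lx.
have ne : l != [::] by case: l {t v lx} h.
have ne' : setw1 l (w1 l %% (size l).+1) != [::] by case: (l) ne => [|[? ?] ?].
rewrite /psi lastx_rcons /= last_rcons /= size_rcons /= -cats1 take_size_cat //.
rewrite cats1 w1_rcons // w1_setw1 // setw1_setw1 size_setw1.
have q0 : 0 < w1 l %/ (size l).+1 by rewrite divn_gt0.
by rewrite prednK // addnC -divn_eq setw1K.
Qed.

Lemma S_phi l : tv l -> S (phi l) = S l.
Proof.
move=> t; rewrite /phi; case: leqP => h //.
have ne : l != [::] by case: l {t} h.
rewrite S_rcons1 size_setw1.
have q0 : 0 < w1 l %/ (size l).+1 by rewrite divn_gt0.
rewrite prednK //.
have := S_setw1 (w1 l %% (size l).+1) ne.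
have := divn_eq (w1 l) (size l).+1.
lia.
Qed.

Lemma psi_TA l : valid l -> Bc l -> tv (psi l).
Proof.
move=> v; rewrite /Bc /psi; case: ifP => lx.
  by rewrite tv_valid v lx.
case/andP=> s1 s2.
case/lastP: l v lx s1 s2 => [|m [y z]] // v.
rewrite lastx_rcons size_rcons /= -cats1 take_size_cat // tv_setw1 => y1 _ _.
have y0 : 0 < y.
  by have := lastx_pos v; rewrite lastx_rcons.
have y' : y = 1 by lia.
by subst y; apply: (@rcons_tv _ z).
Qed.

Lemma phi_psi l : valid l -> Bc l -> phi (psi l) = l.
Proof.
move=> v; rewrite /Bc /psi; case: ifP => lx.
  by rewrite /phi => ->.
case/andP=> s1 s2.
case/lastP: l v lx s1 s2 => [|m [y z]] // v.
rewrite lastx_rcons size_rcons /= last_rcons /= -cats1 take_size_cat // => y1 s1 s2.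
have y0 : 0 < y.
  by have := lastx_pos v; rewrite lastx_rcons.
have y' : y = 1 by lia.
subst y.
have ne : m != [::] by case: m {v s2} s1.
rewrite cats1 w1_rcons // in s2 *.
rewrite /phi size_setw1 w1_setw1 //.
have -> : (w1 m + z.+1 * (size m).+1 <= size m) = false.
  by apply/negbTE; rewrite -ltnNge; nia.
rewrite [w1 m + _]addnC modnMDl divnMDl // modn_small // divn_small // ?add0n /=.
by rewrite setw1_setw1 setw1K addn0.
Qed.

Fixpoint oddsum (s : seq nat) : nat :=
  match s with a :: b :: r => a + oddsum r | [:: a] => a | [::] => 0 end.

Lemma oddsum_cons x s : oddsum (x :: s) = x + oddsum (behead s).
Proof. by case: s => [|b r] //=; rewrite addn0. Qed.

Lemma ois_aux s :
  (\sum_(i < size s | ~~ odd i) nth 0 s i = oddsum s) /\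
  (\sum_(i < size s | odd i) nth 0 s i = oddsum (behead s)).
Proof.
elim: s => [|x s [IH1 IH2]]; first by rewrite !big_ord0.
split.
  rewrite big_mkcond big_ord_recl oddsum_cons -IH2 [in RHS]big_mkcond.
  congr (_ + _); apply: eq_bigr => i _.
  by rewrite /bump /= add0n ?negbK.
rewrite big_mkcond big_ord_recl -IH1 [in RHS]big_mkcond /= add0n.
apply: eq_bigr => i _.
by rewrite /bump /= add0n ?negbK.
Qed.

Lemma odd_indexed_sumE s : odd_indexed_sum s = oddsum s.
Proof. by have [] := ois_aux s. Qed.

Fixpoint de (s : seq nat) : bool :=
  match s with
  | [::] => true
  | a :: b :: r => (head 0 r < b) && (b < a) && de r
  | _ => false
  end.

Lemma de_in_De_aux n s : size s <= n -> de s = in_De s.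
Proof.
rewrite /in_De /is_distinct_partition.
elim: n s => [|n IH] [|a [|b r]] //= hs; first by rewrite !andbF.
rewrite IH; last by move: hs => /=; lia.
rewrite negbK.
case: r {hs} => [|c r] /=.
  by case: (ltnP 0 b) => hb; case: (ltnP b a) => h2; case: (ltnP 0 a) => h3;
     rewrite /= ?andbT ?andbF //; lia.
rewrite negbK.
case: (ltnP c b) => h1 /=; last by rewrite !andbF.
case: (ltnP b a) => h2 /=; last by rewrite !andbF.
have -> : 0 < a by lia.
have -> : 0 < b by lia.
by case: (0 < c); case: (all _ r); case: (path _ _ _).
Qed.

Lemma de_in_De s : de s = in_De s.
Proof. exact: de_in_De_aux (leqnn _). Qed.

Fixpoint lev (s : seq nat) : lvl :=
  match s with
  | a :: b :: r => (a - b + hx (lev r), b - head 0 r - 1) :: lev r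
  | _ => [::]
  end.

Fixpoint unlev (l : lvl) : seq nat :=
  match l with
  | [::] => [::]
  | (x, w) :: l' =>
      let r := unlev l' in
      let b := head 0 r + w + 1 in
      (b + (x - hx l')) :: b :: r
  end.

Lemma lev_props n s : size s <= n -> de s ->
  [/\ tv (lev s), unlev (lev s) = s, S (lev s) = oddsum s &
      size (build (lev s)) + hx (lev s) = head 0 s + 1].
Proof.
elim: n s => [|n IH] [|a [|b r]] //= hs /andP[/andP[h1 h2] dr].
have [t1 t2 t3 t4] := IH r (ltac:(move: hs => /=; lia)) dr.
split.
- rewrite t1 andbT; lia.
- rewrite t2; congr (_ :: _ :: _); lia.
- rewrite /S sumn_build -/(S (lev r)) t3. lia.
- rewrite size_cat size_map size_nseq; lia.
Qed.

Lemma unlev_props l : tv l -> de (unlev l) && (lev (unlev l) == l).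
Proof.
elim: l => [|[x w] l IH] //= /andP[h1 tl].
have /andP[d1 /eqP d2] := IH tl.
rewrite d1 d2 andbT /=.
apply/andP; split.
  apply/andP; split; lia.
apply/eqP; congr ((_, _) :: _); lia.
Qed.

Fixpoint dec m : seq (seq nat) :=
  match m with 0 => [:: [::]] | m'.+1 => dec m' ++ map (cons m'.+1) (dec m') end.

Lemma gtn_trans : transitive gtn.
Proof. by move=> a b c h1 h2; exact: ltn_trans h2 h1. Qed.

Lemma mem_dec m s : (s \in dec m) = sorted gtn s && all (fun x => 0 < x <= m) s.
Proof.
elim: m s => [|m IH] s.
  case: s => [|x s] //=; rewrite inE andbC; case: x => //= x; by rewrite andbF.
rewrite /= mem_cat IH.
case: s => [|x t] /=.
  by [].
rewrite (path_sortedE gtn_trans).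
apply/idP/idP.
  case/orP.
    case/and3P=> /andP[h1 h2] h3 h4; rewrite h1 h2 /=.
    apply/andP; split; first by lia.
    apply/allP => y yt; have := allP h4 y yt; lia.
  case/mapP=> u; rewrite IH => /andP[su au] [-> ->].
  rewrite su /= andbT; apply/andP; split.
    by apply/allP => y yt; have := allP au y yt; rewrite /gtn /=; lia.
  rewrite ltnSn /=; apply/allP => y yt; have := allP au y yt; lia.
case/and3P=> /andP[h1 h2] h3 h4.
case: (ltnP x m.+1) => hx.
  apply/orP; left; rewrite h1 h2 /=.
  apply/andP; split; first by lia.
  apply/allP => y yt; have := allP h1 y yt; have := allP h4 y yt; rewrite /gtn /=; lia.
apply/orP; right; apply/mapP; exists t.
  rewrite IH h2 /=; apply/allP => y yt; have := allP h1 y yt; have := allP h4 y yt; rewrite /gtn /=; lia.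
by have -> : x = m.+1 by lia.
Qed.

Lemma uniq_dec m : uniq (dec m).
Proof.
elim: m => [|m IH] //=.
rewrite cat_uniq IH map_inj_uniq //=; last by move=> a b [].
rewrite IH andbT; apply/hasPn => s /mapP [u _ ->].
by rewrite /= mem_dec /= ltnn !andbF.
Qed.

Definition F (s : seq nat) := build (phi (lev s)).
Definition G (p : seq nat) := unlev (psi (unbuild p)).
Definition Pa n (s : seq nat) := in_De s && (odd_indexed_sum s == n).

Lemma Pa_dec n s : Pa n s -> s \in dec n.
Proof.
case/andP=> hd /eqP ho; rewrite mem_dec.
move: hd; rewrite /in_De /is_distinct_partition => /andP[/andP[hp hs] _].
rewrite hs /=; rewrite odd_indexed_sumE in ho.
case: s hp hs ho => [|x t] // hp hs ho.
rewrite /= in hp; case/andP: hp => x0 pt.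
rewrite oddsum_cons in ho.
move: hs; rewrite /= (path_sortedE gtn_trans) => /andP[h1 _].
rewrite /= x0 /=; apply/andP; split; first by lia.
apply/allP => y yt; have := allP h1 y yt; have := allP pt y yt; rewrite /gtn /=; lia.
Qed.

Lemma GF s : de s -> G (F s) = s.
Proof.
move=> d; have [t1 t2 _ _] := lev_props (leqnn _) d.
have /andP[v _] := phi_TB t1.
by rewrite /G /F unbuild_build // psi_phi.
Qed.

Theorem theorem10 (n : nat) :
  exists (A B : seq (seq nat)),
    [/\ uniq A, uniq B,
        (forall s, (s \in A) = in_De s && (odd_indexed_sum s == n)),
        (forall s, (s \in B) =
                   [&& is_partition s, sumn s == n & (0 <= crank s)%R]) &
        size A = size B].
Proof.
set A := filter (Pa n) (dec n).
have memA : forall s, (s \in A) = Pa n s.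
  move=> s; rewrite mem_filter; apply/andP/idP => [[]//|h]; split => //.
  exact: Pa_dec.
exists A, (map F A); split.
- exact: filter_uniq (uniq_dec n).
- rewrite map_inj_in_uniq; first exact: filter_uniq (uniq_dec n).
  apply: (can_in_inj (g := G)) => s; rewrite memA => /andP[hd _].
  by apply: GF; rewrite de_in_De.
- exact: memA.
- move=> s; apply/mapP/idP.
    case=> t; rewrite memA => /andP[hd /eqP ho] ->.
    rewrite -de_in_De in hd.
    have [t1 _ t3 _] := lev_props (leqnn _) hd.
    have /andP[v bc] := phi_TB t1.
    rewrite is_partition_build // crank_build // bc andbT /=.
    by rewrite -/(S _) S_phi // t3 -odd_indexed_sumE ho.
  case/and3P=> hp /eqP hs hc.
  have vl := valid_unbuild hp.
  have bl := build_unbuild hp.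
  set l := unbuild s in vl bl.
  have bc : Bc l by rewrite -crank_build // bl.
  have ta := psi_TA vl bc.
  have /andP[d /eqP e] := unlev_props ta.
  exists (unlev (psi l)).
    rewrite memA /Pa -de_in_De d /= odd_indexed_sumE.
    have [_ _ t3 _] := lev_props (leqnn _) d.
    rewrite -t3 e -(S_phi ta) phi_psi // /S bl hs.
    by [].
  by rewrite /F e phi_psi.
- by rewrite size_map.
Qed.
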